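(* In the algebra $\widehat{\mathcal R}(x)$ of non-associative formal power series without constant term in one variable $x$, the unique series $X$ with $\exp X=1+x$ is $$\log(1+x)=\sum_{\tau}\frac{B_\tau}{\tau!}\,\tau,$$ the sum running over all non-associative monomials $\tau$ in $x$.
   Context: $k$ is a field of characteristic $0$. $\widehat{\mathcal R}(x)$ consists of formal (infinite) linear combinations of non-associative monomials (rooted binary plane trees) in $x$ of degree $\ge1$, with the non-associative product extended bilinearly; $1+\widehat{\mathcal R}(x)$ lies in its unital completion. For $X\in\widehat{\mathcal R}(x)$, $\exp X=1+X+\frac{X^2}{2!}+\frac{X^2X}{3!}+\frac{(X^2X)X}{4!}+\cdots=\sum_{n\ge0}\frac{X^n}{n!}$ with left-normed powers $X^n=((XX)\cdots)X$. Bernoulli numbers $B_k$ are defined by $B_0=1$ and $\sum_{k=0}^{n-1}\frac{B_k}{k!(n-k)!}=0$ for $n\ge2$ (so $B_1=-1/2$). For a monomial $\tau$: if $\tau=x$ set $B_\tau=1$, $\tau!=1$; otherwise $\tau$ can be written uniquely as $(\cdots((x\tau_1)\tau_2)\cdots)\tau_k$ with $k\ge1$ and monomials $\tau_i$, and one sets $B_\tau=B_kB_{\tau_1}\cdots B_{\tau_k}$ and $\tau!=k!\,\tau_1!\cdots\tau_k!$. *)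

(* Defs.v *)
From HB Require Import structures.
From mathcomp Require Import all_boot all_order all_algebra.
Set Implicit Arguments. Unset Strict Implicit. Unset Printing Implicit Defensive.
Import Order.TTheory GRing.Theory Num.Theory.
Local Open Scope ring_scope.

(* Non-associative monomials in x = rooted binary plane trees.
   Leaf is the monomial x; Node t1 t2 is the product t1 t2. *)
Inductive tree : Type := Leaf | Node of tree & tree.

Fixpoint deg (t : tree) : nat :=
  match t with Leaf => 1%N | Node l r => (deg l + deg r)%N end.

(* Elements of \hat R(x): formal infinite linear combinations of monomials
   (of degree >= 1), i.e. coefficient functions tree -> k. *)
Definition series (k : fieldType) := tree -> k.

Definition xS (k : fieldType) : series k :=
  fun t => if t is Leaf then 1 else 0.

(* Bilinear extension of the product of monomials (t1,t2) |-> Node t1 t2: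
   the coefficient of Node l r in F*G is F(l) G(r); that of x is 0. *)
Definition mulS (k : fieldType) (F G : series k) : series k :=
  fun t => match t with Leaf => 0 | Node l r => F l * G r end.

(* powS X n = X^(n+1), left-normed: X^1 = X, X^(m+1) = X^m X. *)
Fixpoint powS (k : fieldType) (X : series k) (n : nat) : series k :=
  match n with 0%N => X | n'.+1 => mulS (powS X n') X end.

(* Elements of the unital completion 1 + ... are represented as
   (constant term, part of degree >= 1). *)
Definition useries (k : fieldType) := (k * series k)%type.

(* exp X = sum_{n>=0} X^n/n!.  Constant term 1 (from n = 0); since X has no
   constant term, X^n only involves monomials of degree >= n, so the
   coefficient of a monomial t in the (infinite) sum is the finite sum over
   1 <= n <= deg t (the terms with n > deg t vanish). *)
Definition expS (k : fieldType) (X : series k) : useries k :=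
  (1, fun t => \sum_(n < deg t) powS X n t / (n.+1)`!%:R).

Definition one_plus_x (k : fieldType) : useries k := (1, xS k).

(* Left-spine data: every t is uniquely (...((x t_1) t_2) ...) t_m with
   m >= 0 (m = 0 iff t = x).  spine B t = (m, B_{t_1}...B_{t_m},
   t_1!...t_m!), where B_{t_i} and t_i! are themselves computed recursively
   as B_{t_i} = B_{m_i} * prod and t_i! = m_i! * prod. *)
Fixpoint spine (k : fieldType) (B : nat -> k) (t : tree) : nat * k * nat :=
  match t with
  | Leaf => (0%N, 1, 1%N)
  | Node l r =>
      let: (m, p, f) := spine B l in
      let: (mr, pr, fr) := spine B r in
      (m.+1, p * (B mr * pr), (f * (mr`! * fr))%N)
  end.

Definition Btree (k : fieldType) (B : nat -> k) (t : tree) : k :=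
  let: (m, p, _) := spine B t in B m * p.

Definition tfact (k : fieldType) (B : nat -> k) (t : tree) : nat :=
  let: (m, _, f) := spine B t in (m`! * f)%N.

Definition logS (k : fieldType) (B : nat -> k) : series k :=
  fun t => Btree B t / (tfact B t)%:R.

(* Main.v *)
Require Import Defs.
From HB Require Import structures.
From mathcomp Require Import all_boot all_order all_algebra.
From Stdlib Require Import FunctionalExtensionality.
Import GRing.Theory.
Local Open Scope ring_scope.

Section S.
Variable k : fieldType.
Variable B : nat -> k.

Definition sm t := (spine B t).1.1.
Definition sp t := (spine B t).1.2.
Definition sf t := (spine B t).2.
Definition P t := sp t / (sf t)%:R.

Lemma spine_node l r : spine B (Node l r) =
  ((sm l).+1, sp l * (B (sm r) * sp r), (sf l * ((sm r)`! * sf r))%N).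
Proof.
rewrite /sm /sp /sf /=; case: (spine B l) => [[a b] c]; by case: (spine B r) => [[d e] f].
Qed.

Lemma logS_raw t : logS B t = B (sm t) * sp t / ((sm t)`! * sf t)%:R.
Proof. by rewrite /logS /Btree /tfact /sm /sp /sf; case: (spine B t) => [[a b] c]. Qed.

Lemma logS_eq t : logS B t = B (sm t) / (sm t)`!%:R * P t.
Proof. by rewrite logS_raw natrM invfM mulrACA. Qed.

Lemma sm_node l r : sm (Node l r) = (sm l).+1.
Proof. by rewrite {1}/sm spine_node. Qed.

Lemma P_node l r : P (Node l r) = P l * logS B r.
Proof.
rewrite {1}/P /sp /sf spine_node /= logS_raw.
by rewrite natrM invfM mulrACA.
Qed.

Lemma deg_pos t : (0 < deg t)%N.
Proof. elim: t => //= l IHl r IHr; by rewrite addn_gt0 IHl. Qed.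

Lemma sm_lt t : (sm t < deg t)%N.
Proof.
elim: t => // l IHl r IHr; rewrite sm_node /=.
by rewrite -addn1 leq_add // deg_pos.
Qed.

Lemma powL n t : powS (logS B) n t =
  if (n <= sm t)%N then B (sm t - n) / (sm t - n)`!%:R * P t else 0.
Proof.
elim: n t => [|n IH] t; first by rewrite /= logS_eq subn0.
case: t => [|l r]; first by [].
have -> : powS (logS B) n.+1 (Node l r) = powS (logS B) n l * logS B r by [].
rewrite IH sm_node P_node ltnS subSS; case: ifP => _; last by rewrite mul0r.
by rewrite mulrA.
Qed.

Hypothesis hB0 : B 0%N = 1.
Hypothesis hB : forall n : nat, (2 <= n)%N ->
          \sum_(i < n) B i / (i`!%:R * (n - i)`!%:R) = 0.

Lemma existence t :
  \sum_(n < deg t) powS (logS B) n t / (n.+1)`!%:R = xS k t.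
Proof.
case: t => [|l r].
  rewrite /= big_ord1 /= logS_raw /sm /sp /sf /= (_ : (0`! * 1 = 1)%N) // (_ : 1`! = 1)%N //.
  by rewrite hB0 mulr1 !divr1.
set t := Node l r.
set m := sm t.
have hle : (m.+1 <= deg t)%N by apply: sm_lt.
have -> : \sum_(n < deg t) powS (logS B) n t / (n.+1)`!%:R
    = \sum_(i < m.+1) B (m - i) / (m - i)`!%:R * P t / (i.+1)`!%:R.
  rewrite (big_ord_widen _ (fun i => B (m - i) / (m - i)`!%:R * P t / (i.+1)`!%:R) hle).
  rewrite [RHS]big_mkcond; apply: eq_bigr => i _; rewrite powL -/m ltnS.
  by case: ifP => //; rewrite mul0r.
rewrite (reindex_inj rev_ord_inj) /=.
have -> : \sum_(i < m.+1) B (m - (m.+1 - i.+1)) / (m - (m.+1 - i.+1))`!%:R * P t /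
      (m.+1 - i.+1).+1`!%:R
   = (\sum_(i < m.+1) B i / (i`!%:R * (m.+1 - i)`!%:R)) * P t.
  rewrite mulr_suml; apply: eq_bigr => i _.
  have hi : (i <= m)%N by rewrite -ltnS.
  rewrite subSS subKn // -subSn //.
  rewrite invfM /P -!mulrA; congr (_ * (_ * _)); by rewrite mulrA mulrC.
rewrite (_ : \sum_(i < m.+1) _ = 0) ?mul0r //; apply: hB.
by rewrite /m /t sm_node.
Qed.

Lemma powS_agree (X Y : series k) n t :
  (forall s, (deg s <= deg t)%N -> X s = Y s) -> powS X n t = powS Y n t.
Proof.
elim: n t => [|n IH] t H; first by apply: H.
case: t H => [|l r] H; first by [].
have -> : powS X n.+1 (Node l r) = powS X n l * X r by [].
have -> : powS Y n.+1 (Node l r) = powS Y n l * Y r by [].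
rewrite (IH l (fun s hs => H s (leq_trans hs (leq_addr _ _)))) (H r) //.
exact: leq_addl.
Qed.

Lemma powS_agree_succ (X Y : series k) n t :
  (forall s, (deg s < deg t)%N -> X s = Y s) -> powS X n.+1 t = powS Y n.+1 t.
Proof.
case: t => [|l r] H; first by [].
have -> : powS X n.+1 (Node l r) = powS X n l * X r by [].
have -> : powS Y n.+1 (Node l r) = powS Y n l * Y r by [].
have hr : (deg r < deg (Node l r))%N by rewrite /= -{1}(add0n (deg r)) ltn_add2r deg_pos.
have hl : (deg l < deg (Node l r))%N by rewrite /= -{1}(addn0 (deg l)) ltn_add2l deg_pos.
rewrite (H r hr) (@powS_agree X Y n l) // => s hs.
exact: H (leq_ltn_trans hs hl).
Qed.

Lemma sum_recl (d : nat) (F : nat -> k) : (0 < d)%N ->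
  \sum_(n < d) F n = F 0%N + \sum_(n < d.-1) F n.+1.
Proof. case: d => // d _; by rewrite big_ord_recl. Qed.

End S.

Theorem mainTheorem18 (k : fieldType) (hchar : [pchar k] =i pred0)
  (B : nat -> k) (hB0 : B 0%N = 1)
  (hB : forall n : nat, (2 <= n)%N ->
          \sum_(i < n) B i / (i`!%:R * (n - i)`!%:R) = 0)
  (X : series k) :
  expS X = one_plus_x k <-> X = logS B.
Proof.
split; last first.
  move=> ->; rewrite /expS /one_plus_x; congr pair.
  apply: functional_extensionality => t; exact: existence.
move=> H.
have HE : forall t, \sum_(n < deg t) powS X n t / (n.+1)`!%:R = xS k t.
  move=> t; case: H => H'; exact: (congr1 (fun f => f t) H').
apply: functional_extensionality => t.
suff: forall N t, (deg t <= N)%N -> X t = logS B t by apply; apply: leqnn.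
elim=> [|N IH] {}t ht.
  by move: (deg_pos t); rewrite ltnNge ht.
have e1 := HE t; have e2 := @existence k B hB0 hB t.
rewrite (@sum_recl k _ (fun n => powS X n t / (n.+1)`!%:R)) ?deg_pos // in e1.
rewrite (@sum_recl k _ (fun n => powS (logS B) n t / (n.+1)`!%:R)) ?deg_pos // in e2.
have hag : forall s, (deg s < deg t)%N -> X s = logS B s.
  move=> s hs; apply: IH; by rewrite -ltnS (leq_trans hs).
have eS : \sum_(n < (deg t).-1) powS X n.+1 t / (n.+2)`!%:R
        = \sum_(n < (deg t).-1) powS (logS B) n.+1 t / (n.+2)`!%:R.
  apply: eq_bigr => i _; by rewrite (@powS_agree_succ k X (logS B) i t hag).
rewrite eS -e2 in e1.
move/addIr: e1 => /=; by rewrite !divr1.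
Qed.
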